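(* Let $\varphi$ be a modal formula, let $\mathrm{Sub}(\varphi)$ be its set of subformulas, and let $q$ be a propositional variable not occurring in $\varphi$. Put $q^1=q$, $q^0=\neg q$, and $$X=\{\Box(q^e\to\psi)\to\psi:\ e\in\{0,1\},\ \Box\psi\in\mathrm{Sub}(\varphi)\}.$$ Let $X^{\boxdot}=\{\xi^{\boxdot}:\xi\in X\}$. Then: (i) $X^{\boxdot}\vdash_{\mathbf K}\Box\psi^{\boxdot}\to\psi^{\boxdot}$ for every $\Box\psi\in\mathrm{Sub}(\varphi)$; this derivation does not even need necessitation. (ii) $X^{\boxdot}\vdash_{\mathbf K}\psi\leftrightarrow\psi^{\boxdot}$ for every $\psi\in\mathrm{Sub}(\varphi)$.
   Context: $\mathbf K$ is the smallest normal modal logic. The boxdot translation $\varphi\mapsto\varphi^{\boxdot}$ fixes variables, commutes with Boolean connectives, and satisfies $(\Box\varphi)^{\boxdot}=\varphi^{\boxdot}\wedge\Box\varphi^{\boxdot}$. For a normal modal logic $L$, a set of formulas $Y$ and a formula $\theta$, $Y\vdash_L\theta$ (global consequence) means that $\theta$ has a finite derivation from elements of $Y$ and theorems of $L$ using modus ponens and necessitation. *)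

(* Defs.v *)
Inductive form : Type :=
| Var : nat -> form
| Bot : form
| Imp : form -> form -> form
| Box : form -> form.

Definition Neg (a : form) : form := Imp a Bot.
Definition Top : form := Imp Bot Bot.
Definition Or (a b : form) : form := Imp (Neg a) b.
Definition And (a b : form) : form := Neg (Imp a (Neg b)).
Definition Iff (a b : form) : form := And (Imp a b) (Imp b a).

Inductive Kthm : form -> Prop :=
| K_ax1 a b : Kthm (Imp a (Imp b a))
| K_ax2 a b c : Kthm (Imp (Imp a (Imp b c)) (Imp (Imp a b) (Imp a c)))
| K_ax3 a : Kthm (Imp (Neg (Neg a)) a)
| K_axK a b : Kthm (Imp (Box (Imp a b)) (Imp (Box a) (Box b)))
| K_mp a b : Kthm (Imp a b) -> Kthm a -> Kthm b
| K_nec a : Kthm a -> Kthm (Box a).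

(* The flag [nec] says whether the
   necessitation rule may be applied (to derived formulas);
   [gderiv true] is the global consequence of the paper, [gderiv false]
   is derivability using modus ponens only. *)
Inductive gderiv (nec : bool) (Y : form -> Prop) : form -> Prop :=
| gd_hyp a : Y a -> gderiv nec Y a
| gd_thm a : Kthm a -> gderiv nec Y a
| gd_mp a b : gderiv nec Y (Imp a b) -> gderiv nec Y a -> gderiv nec Y b
| gd_nec a : nec = true -> gderiv nec Y a -> gderiv nec Y (Box a).

Fixpoint boxdot (f : form) : form :=
  match f with
  | Var n => Var n
  | Bot => Bot
  | Imp a b => Imp (boxdot a) (boxdot b)
  | Box a => And (boxdot a) (Box (boxdot a))
  end.

(* Subformula relation: [subf psi phi] means psi ∈ Sub(phi). *)
Inductive subf : form -> form -> Prop :=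
| sub_refl a : subf a a
| sub_impl a b c : subf c a -> subf c (Imp a b)
| sub_impr a b c : subf c b -> subf c (Imp a b)
| sub_box a c : subf c a -> subf c (Box a).

Fixpoint occurs (q : nat) (f : form) : Prop :=
  match f with
  | Var n => n = q
  | Bot => False
  | Imp a b => occurs q a \/ occurs q b
  | Box a => occurs q a
  end.

Definition qe (q : nat) (e : bool) : form := if e then Var q else Neg (Var q).

Definition Xset (phi : form) (q : nat) (xi : form) : Prop :=
  exists (e : bool) (psi : form),
    subf (Box psi) phi /\ xi = Imp (Box (Imp (qe q e) psi)) psi.

Definition Xbd (phi : form) (q : nat) (th : form) : Prop :=
  exists xi, Xset phi q xi /\ th = boxdot xi.

(* Main.v *)
Require Import Defs.

Definition ext (Y : form -> Prop) (a : form) : form -> Prop := fun x => Y x \/ x = a.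
Notation D := (gderiv false).

Lemma Kid a : Kthm (Imp a a).
Proof.
  eapply K_mp. eapply K_mp. apply (K_ax2 a (Imp a a) a).
  apply K_ax1. apply K_ax1.
Qed.

Lemma ded Y a b : D (ext Y a) b -> D Y (Imp a b).
Proof.
  intro H; induction H.
  - destruct H as [H|H].
    + eapply gd_mp. apply gd_thm, K_ax1. now apply gd_hyp.
    + subst. apply gd_thm, Kid.
  - eapply gd_mp. apply gd_thm, K_ax1. now apply gd_thm.
  - eapply gd_mp. eapply gd_mp. apply gd_thm, K_ax2. eassumption. eassumption.
  - discriminate.
Qed.

Lemma weak n Y Z a : (forall x, Y x -> Z x) -> gderiv n Y a -> gderiv n Z a.
Proof.
  intros HYZ H; induction H.
  - apply gd_hyp; auto.
  - now apply gd_thm.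
  - eapply gd_mp; eauto.
  - apply gd_nec; auto.
Qed.

Lemma hyp0 Y a : D (ext Y a) a.
Proof. apply gd_hyp. now right. Qed.
Lemma wk Y a b : D Y b -> D (ext Y a) b.
Proof. apply weak. intros; now left. Qed.

Lemma mp Y a b : D Y (Imp a b) -> D Y a -> D Y b.
Proof. apply gd_mp. Qed.

Lemma efq Y a : D Y Bot -> D Y a.
Proof.
  intro H. eapply mp. apply gd_thm, (K_ax3 a).
  eapply mp. apply gd_thm, (K_ax1 Bot (Neg a)). exact H.
Qed.

Lemma raa Y a : D (ext Y (Neg a)) Bot -> D Y a.
Proof. intro H. eapply mp. apply gd_thm, (K_ax3 a). now apply ded. Qed.

Lemma and_i Y a b : D Y a -> D Y b -> D Y (And a b).
Proof.
  intros Ha Hb. apply ded. eapply mp. eapply mp. apply hyp0. apply wk, Ha. apply wk, Hb.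
Qed.

Lemma and_e1 Y a b : D Y (And a b) -> D Y a.
Proof.
  intro H. apply raa. eapply mp. apply wk, H. apply ded. apply efq.
  eapply mp. apply wk, hyp0. apply hyp0.
Qed.

Lemma and_e2 Y a b : D Y (And a b) -> D Y b.
Proof.
  intro H. apply raa. eapply mp. apply wk, H. apply ded. apply wk, hyp0.
Qed.

Definition empty : form -> Prop := fun _ => False.

Lemma toK a : D empty a -> Kthm a.
Proof.
  intro H; induction H.
  - destruct H.
  - assumption.
  - eapply K_mp; eauto.
  - discriminate.
Qed.

Lemma lift n Y a b : Kthm (Imp a b) -> gderiv n Y a -> gderiv n Y b.
Proof. intros. eapply gd_mp. apply gd_thm; eassumption. assumption. Qed.
Lemma lift2 n Y a b c : Kthm (Imp a (Imp b c)) -> gderiv n Y a -> gderiv n Y b -> gderiv n Y c.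
Proof. intros. eapply gd_mp. eapply lift; eassumption. assumption. Qed.

Lemma boxmono a b : Kthm (Imp (Box b) (Box (Imp a b))).
Proof. eapply K_mp. apply K_axK. apply K_nec, K_ax1. Qed.

Lemma subf_trans c a phi : subf c a -> subf a phi -> subf c phi.
Proof.
  intros H1 H2; induction H2; auto.
  - apply sub_impl; auto.
  - apply sub_impr; auto.
  - apply sub_box; auto.
Qed.

Lemma part1 phi q psi : subf (Box psi) phi ->
  D (Xbd phi q) (Imp (Box (boxdot psi)) (boxdot psi)).
Proof.
  intro Hs.
  assert (Hx : forall e, D (Xbd phi q)
     (Imp (And (Imp (boxdot (qe q e)) (boxdot psi)) (Box (Imp (boxdot (qe q e)) (boxdot psi)))) (boxdot psi))).
  { intro e. apply gd_hyp. exists (Imp (Box (Imp (qe q e) psi)) psi). split.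
    - exists e, psi. auto.
    - reflexivity. }
  pose proof (Hx true) as H1. pose proof (Hx false) as H0. simpl in H1, H0.
  clear Hx. set (p := boxdot psi) in *.
  apply ded. apply raa.
  assert (Hnq : D (ext (ext (Xbd phi q) (Box p)) (Neg p)) (Neg (Var q))).
  { apply ded. eapply mp. apply wk, hyp0. eapply mp. do 3 apply wk. exact H0.
    apply and_i.
    - apply ded. apply efq. eapply mp. apply hyp0. apply wk, hyp0.
    - eapply mp. apply gd_thm, boxmono. apply wk, wk, hyp0. }
  eapply mp. apply hyp0. eapply mp. do 2 apply wk. exact H1.
  apply and_i.
  - apply ded. apply efq. eapply mp. apply wk, Hnq. apply hyp0.
  - eapply mp. apply gd_thm, boxmono. apply wk, hyp0.
Qed.

Lemma t_imp a a' b b' : Kthm (Imp (Iff a a') (Imp (Iff b b') (Iff (Imp a b) (Imp a' b')))).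
Proof.
  apply toK. apply ded, ded. apply and_i.
  - apply ded, ded. eapply mp. eapply and_e1. do 2 apply wk. apply hyp0.
    eapply mp. apply wk, hyp0. eapply mp. eapply and_e2. do 3 apply wk. apply hyp0. apply hyp0.
  - apply ded, ded. eapply mp. eapply and_e2. do 2 apply wk. apply hyp0.
    eapply mp. apply wk, hyp0. eapply mp. eapply and_e1. do 3 apply wk. apply hyp0. apply hyp0.
Qed.

Lemma t_box A B c : Kthm (Imp (Imp A B) (Imp (Imp B A) (Imp (Imp B c) (Iff A (And c B))))).
Proof.
  apply toK. apply ded, ded, ded. apply and_i.
  - apply ded. apply and_i.
    + eapply mp. apply wk, hyp0. eapply mp. do 3 apply wk. apply hyp0. apply hyp0.
    + eapply mp. do 3 apply wk. apply hyp0. apply hyp0.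
  - apply ded. eapply mp. do 2 apply wk. apply hyp0. eapply and_e2. apply hyp0.
Qed.

Lemma t_and1 a b : Kthm (Imp (And a b) a).
Proof. apply toK. apply ded. eapply and_e1. apply hyp0. Qed.
Lemma t_and2 a b : Kthm (Imp (And a b) b).
Proof. apply toK. apply ded. eapply and_e2. apply hyp0. Qed.

Lemma D_to n Y a : D Y a -> gderiv n Y a.
Proof.
  intro H; induction H.
  - now apply gd_hyp.
  - now apply gd_thm.
  - eapply gd_mp; eauto.
  - discriminate.
Qed.

Lemma boxiff Y a b : gderiv true Y (Imp a b) -> gderiv true Y (Imp (Box a) (Box b)).
Proof. intro H. eapply lift. apply K_axK. now apply gd_nec. Qed.

Theorem claim1 (phi : form) (q : nat) :
  ~ occurs q phi ->
  (forall psi, subf (Box psi) phi ->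
     gderiv false (Xbd phi q) (Imp (Box (boxdot psi)) (boxdot psi))) /\
  (forall psi, subf psi phi ->
     gderiv true (Xbd phi q) (Iff psi (boxdot psi))).
Proof.
  intros _. split.
  - intros psi Hs. now apply part1.
  - induction psi; intro Hs; simpl.
    + apply gd_thm, toK, and_i; apply gd_thm, Kid.
    + apply gd_thm, toK, and_i; apply gd_thm, Kid.
    + eapply lift2. apply t_imp.
      * apply IHpsi1. eapply subf_trans. apply sub_impl, sub_refl. exact Hs.
      * apply IHpsi2. eapply subf_trans. apply sub_impr, sub_refl. exact Hs.
    + assert (IH : gderiv true (Xbd phi q) (Iff psi (boxdot psi))).
      { apply IHpsi. eapply subf_trans. apply sub_box, sub_refl. exact Hs. }
      eapply gd_mp. eapply lift2. apply t_box.
      * apply boxiff. eapply lift. apply t_and1. exact IH.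
      * apply boxiff. eapply lift. apply t_and2. exact IH.
      * apply D_to, part1, Hs.
Qed.
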